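(* Let $\underline{t}$ be an increment array of size $s$ for $n$ agents, with period $\pi(\underline{t})$. Then for all $1\le i\le j\le n$, \[C(i,\underline{t})=C(j,\underline{t})\iff \exists\, r\in\mathbb{Z},\ 0\le r\le \frac{(n-i)s}{n\,\pi(\underline{t})}\ :\ j=i+r\cdot\frac{n\,\pi(\underline{t})}{s}.\]
   Context: Agent identifiers are $\{1,\ldots,n\}$, arithmetic on identifiers is modulo $n$ with representatives in $\{1,\ldots,n\}$ (a value $0$ is replaced by $n$). An increment array (IA) of size $s$ ($1\le s\le n$) for $n$ agents is a tuple $\underline{t}=\langle t_0,\ldots,t_{s-1}\rangle$ of non-negative integers with $\sum t_i=n-s$. Cumulative increments: $\varphi_1=0$, $\varphi_i=\sum_{k=0}^{i-2}(t_k+1)$ for $2\le i\le s+1$. The coalition generated from $x$ is $C(x,\underline{t})=\{x\}\cup\bigcup_{i=2}^{s}\{(x+\varphi_i)\bmod n\}$ (residues in $\{1,\ldots,n\}$). The period $\pi(\underline{t})$ is the least $p\in\{1,\ldots,s\}$ such that $\underline{t}$ consists of $s/p$ identical consecutive copies of its prefix $\langle t_0,\ldots,t_{p-1}\rangle$ (in particular $p\mid s$). *)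

(* Defs.v *)
From mathcomp Require Import all_boot all_order all_algebra.
Set Implicit Arguments. Unset Strict Implicit. Unset Printing Implicit Defensive.

Definition agent_mod (n x : nat) : nat := if x %% n == 0 then n else x %% n.

Definition is_IA (n : nat) (t : seq nat) : bool :=
  (1 <= size t <= n) && (sumn t == n - size t).

Definition phi (t : seq nat) (i : nat) : nat :=
  \sum_(0 <= k < i.-1) (nth 0 t k).+1.

(* Coalition generated from x : { (x + phi_i) mod n | 1 <= i <= s };
   the i = 1 term is x itself (as x is in {1..n}). *)
Definition coalition (n x : nat) (t : seq nat) : seq nat :=
  [seq agent_mod n (x + phi t i) | i <- iota 1 (size t)].

Definition is_period (t : seq nat) (p : nat) : bool :=
  (0 < p) && (p %| size t) && (t == flatten (nseq (size t %/ p) (take p t))).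

(* The period: least p in {1..s} which is a period (s itself always is, if s >= 1). *)
Definition period (t : seq nat) : nat :=
  head (size t) [seq p <- iota 1 (size t) | is_period t p].

(* Main.v *)
Require Import Defs.
From mathcomp Require Import all_boot all_order all_algebra.
From mathcomp Require Import zify.
Import Order.TTheory GRing.Theory Num.Theory.
Set Implicit Arguments. Unset Strict Implicit.

Definition ff (t : seq nat) k := nth 0 t (k %% size t).
Definition pos (t : seq nat) k := \sum_(0 <= m < k) (ff t m).+1.
Definition Rs (t : seq nat) m := forall k, ff t (k + m) = ff t k.

Lemma pos0 t : pos t 0 = 0.
Proof. by rewrite /pos big_geq. Qed.

Lemma posS t k : pos t k.+1 = pos t k + (ff t k).+1.
Proof. by rewrite /pos big_nat_recr. Qed.

Lemma pos_lt t k l : k < l -> pos t k < pos t l.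
Proof.
elim: l => // l IH; rewrite ltnS leq_eqVlt => /orP[/eqP->|/IH h].
  by rewrite posS; lia.
by rewrite posS; lia.
Qed.

Lemma pos_le t k l : (pos t k <= pos t l) = (k <= l).
Proof.
case: (leqP k l) => h.
  move: h; rewrite leq_eqVlt => /orP[/eqP->|/(pos_lt t)/ltnW ->//]; exact: leqnn.
by rewrite leqNgt pos_lt.
Qed.

Lemma ffDs t k : ff t (k + size t) = ff t k.
Proof. by rewrite /ff modnDr. Qed.

Lemma pos_s n t : is_IA n t -> pos t (size t) = n.
Proof.
case/andP=> /andP[s1 sn] /eqP hs.
rewrite /pos (eq_big_nat _ _ (F2 := fun m => (nth 0 t m) + 1)); last first.
  by move=> i /andP[_ hi]; rewrite /ff modn_small // addn1.
rewrite big_split /= sum_nat_const_nat.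
have -> : \sum_(0 <= m < size t) nth 0 t m = sumn t.
  by rewrite sumnE [RHS](big_nth 0).
rewrite hs. lia.
Qed.

Lemma posDs n t k : is_IA n t -> pos t (k + size t) = pos t k + n.
Proof.
move=> hI; elim: k => [|k IH]; first by rewrite add0n pos0 (pos_s hI).
by rewrite addSn !posS IH ffDs; lia.
Qed.

Lemma posDcs n t k c : is_IA n t -> pos t (k + c * size t) = pos t k + c * n.
Proof.
move=> hI; elim: c k => [|c IH] k; first by rewrite !mul0n !addn0.
by rewrite mulSn addnA IH (posDs _ hI); lia.
Qed.

Lemma pos_mod n t k : is_IA n t -> pos t k = pos t (k %% size t) + (k %/ size t) * n.
Proof. by move=> hI; rewrite -posDcs // addnC -divn_eq. Qed.

Lemma pos_ltn n t k : is_IA n t -> k < size t -> pos t k < n.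
Proof. by move=> hI hk; rewrite -(pos_s hI); apply: pos_lt. Qed.

Lemma am_mod n x y : x = y %[mod n] -> agent_mod n x = agent_mod n y.
Proof. by rewrite /agent_mod => ->. Qed.

Lemma am_inj n x y : 0 < n -> agent_mod n x = agent_mod n y -> x = y %[mod n].
Proof.
move=> n0; rewrite /agent_mod.
have hx := ltn_pmod x n0; have hy := ltn_pmod y n0.
case: eqP => hx0; case: eqP => hy0 //; lia.
Qed.

Lemma am_id n x : 0 < x <= n -> agent_mod n x = x.
Proof.
case/andP=> x0 xn; rewrite /agent_mod.
case: (ltnP x n) => h.
  by rewrite modn_small //; case: eqP => //; lia.
have -> : x = n by lia.
by rewrite modnn.
Qed.
Lemma phi_pos t i : i <= size t -> phi t i = pos t i.-1.
Proof.
move=> hi; rewrite /phi /pos; apply: eq_big_nat => m /andP[_ hm].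
by rewrite /ff modn_small //; lia.
Qed.

Lemma IA_n0 n t : is_IA n t -> 0 < n.
Proof. by case/andP=> /andP[h1 h2] _; lia. Qed.

Lemma memC n t x z : is_IA n t ->
  (z \in coalition n x t) <-> exists k, z = agent_mod n (x + pos t k).
Proof.
move=> hI; have s0 : 0 < size t by case/andP: hI => /andP[].
split.
  case/mapP=> i; rewrite mem_iota => /andP[i1 i2] ->.
  exists i.-1; rewrite phi_pos //; lia.
case=> k ->; apply/mapP; exists (k %% size t).+1.
  rewrite mem_iota; have := ltn_pmod k s0; lia.
rewrite phi_pos /=; last by have := ltn_pmod k s0; lia.
apply: am_mod; rewrite (pos_mod k hI) addnA.
by rewrite -modnDm modnMl addn0 modn_mod.
Qed.

Definition memP n t x z := exists k, z = agent_mod n (x + pos t k).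
Definition Sp t y := exists l, y = pos t l.

Lemma S_mem n t x y : is_IA n t -> Sp t y <-> memP n t x (agent_mod n (x + y)).
Proof.
move=> hI; have s0 : 0 < size t by case/andP: hI => /andP[].
have n0 := IA_n0 hI.
split; first by case=> l ->; exists l.
case=> k /(am_inj n0) /eqP; rewrite eqn_modDl => /eqP hy.
have hk : pos t k %% n = pos t (k %% size t).
  rewrite (pos_mod k hI) addnC modnMDl modn_small //.
  apply: (pos_ltn hI); exact: ltn_pmod.
exists (k %% size t + (y %/ n) * size t).
rewrite (posDcs _ _ hI) -hk -hy addnC; exact: divn_eq.
Qed.
Lemma R_add t a b : Rs t a -> Rs t b -> Rs t (a + b).
Proof. by move=> ha hb k; rewrite addnA hb ha. Qed.

Lemma R_sub t a b : Rs t (a + b) -> Rs t b -> Rs t a.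
Proof. by move=> hab hb k; rewrite -hb -addnA hab. Qed.

Lemma R_mul t a c : Rs t a -> Rs t (c * a).
Proof.
move=> ha; elim: c => [|c IH]; first by move=> k; rewrite mul0n addn0.
by rewrite mulSn; apply: R_add.
Qed.

Lemma R_mod t a b : Rs t a -> Rs t b -> Rs t (a %% b).
Proof.
move=> ha hb; apply: (@R_sub _ _ (a %/ b * b)); last exact: R_mul.
by rewrite addnC -divn_eq.
Qed.

Lemma R_gcd t a b : Rs t a -> Rs t b -> Rs t (gcdn a b).
Proof.
elim: a {-2}a (leqnn a) b => [|m IH] a ha b.
  by move: ha; rewrite leqn0 => /eqP -> _ hb; rewrite gcd0n.
rewrite gcdnE; case: eqP => [_ _ //|/eqP a0 hA hB].
apply: IH; last by [].
  have a0' : 0 < a by rewrite lt0n.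
  have := ltn_pmod b a0'; lia.
exact: R_mod.
Qed.

Lemma R_pos t p : Rs t p -> forall k, pos t (k + p) = pos t k + pos t p.
Proof.
move=> hp; elim=> [|k IH]; first by rewrite add0n pos0.
by rewrite addSn !posS IH hp; lia.
Qed.

Lemma R_posM t p c : Rs t p -> pos t (c * p) = c * pos t p.
Proof.
move=> hp; elim: c => [|c IH]; first by rewrite !mul0n pos0.
by rewrite !mulSn addnC R_pos // IH; lia.
Qed.

Lemma size_flatten_nseq (u : seq nat) c : size (flatten (nseq c u)) = c * size u.
Proof. by elim: c => //= c IH; rewrite size_cat IH mulSn. Qed.

Lemma nth_flatten_nseq (u : seq nat) c k : k < c * size u ->
  nth 0 (flatten (nseq c u)) k = nth 0 u (k %% size u).
Proof.
elim: c k => [|c IH] k; first by rewrite mul0n ltn0.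
rewrite mulSn /= nth_cat => h2; case: ltnP => h1.
  by rewrite modn_small.
rewrite IH; last by lia.
by congr nth; rewrite -{2}(subnK h1) modnDr.
Qed.

Lemma R_modp t p k : Rs t p -> ff t k = ff t (k %% p).
Proof.
move=> hp; rewrite {1}(divn_eq k p) addnC.
by have := R_mul (k %/ p) hp => ->.
Qed.

Lemma is_periodP t p : 0 < size t ->
  is_period t p <-> [/\ 0 < p, p %| size t & Rs t p].
Proof.
move=> s0; rewrite /is_period; split.
  case/andP=> /andP[p0 pd] /eqP ht; split => // k.
  have ps : p <= size t by apply: dvdn_leq.
  have hsz : size (take p t) = p by rewrite size_take_min; apply/minn_idPl.
  have key : forall a, a < size t -> nth 0 t a = nth 0 t (a %% p).
    move=> a ha; rewrite {1}ht nth_flatten_nseq; last by rewrite hsz divnK.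
    by rewrite hsz nth_take //; apply: ltn_pmod.
  rewrite /ff key; last exact: ltn_pmod.
  rewrite [in RHS]key; last exact: ltn_pmod.
  by rewrite !(modn_dvdm _ pd) modnDr.
case=> p0 pd hp; rewrite p0 pd /=; apply/eqP.
have ps : p <= size t by apply: dvdn_leq.
have hsz : size (take p t) = p by rewrite size_take_min; apply/minn_idPl.
apply: (@eq_from_nth _ 0).
  by rewrite size_flatten_nseq hsz divnK.
move=> k hk; rewrite nth_flatten_nseq; last by rewrite hsz divnK.
rewrite hsz nth_take; last exact: ltn_pmod.
have := R_modp k hp; rewrite /ff modn_small // modn_small //.
by apply: leq_trans (ltn_pmod _ _) ps.
Qed.

Lemma head_filter_iota (P : pred nat) d a b q : a <= q < a + b -> P q ->
  P (head d [seq p <- iota a b | P p]) /\ head d [seq p <- iota a b | P p] <= q.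
Proof.
elim: b a => [|b IH] a; first by rewrite addn0; lia.
move=> hq Pq /=; case: ifP => Pa /=; first by split => //; lia.
apply: IH => //; case: (eqVneq q a) => [qa|]; first by rewrite qa Pa in Pq.
lia.
Qed.

Lemma period_spec t : 0 < size t ->
  is_period t (period t) /\ forall q, is_period t q -> period t <= q.
Proof.
move=> s0.
have ps : is_period t (size t).
  rewrite /is_period s0 dvdnn divnn s0 take_size /= cats0; exact: eqxx.
have := @head_filter_iota (is_period t) (size t) 1 (size t) (size t).
case=> //; first by lia.
move=> h1 _; split => // q hq.
have : q <= size t /\ 0 < q.
  by case/andP: hq => /andP[q0 qd] _; split => //; apply: dvdn_leq.
case=> qs q0.
by case: (@head_filter_iota (is_period t) (size t) 1 (size t) q) => //; lia.
Qed.
Lemma rat_fwd n s p g i j r : g * s = n * p -> 0 < s -> 0 < n * p ->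
  j = i + r * g -> j <= n ->
  exists rr : int,
     (0 <= rr)%R /\
     (rr%:~R <= ((n - i) * s)%:R / (n * p)%:R :> rat)%R /\
     (j%:R = i%:R + rr%:~R * ((n * p)%:R / s%:R) :> rat)%R.
Proof.
move=> hg s0 np0 hj jn; exists (Posz r); split => //.
have -> : ((Posz r)%:~R : rat) = (r%:R)%R by rewrite -pmulrn.
have s0' : (s%:R : rat) != 0%R by rewrite pnatr_eq0 -lt0n.
split.
  rewrite ler_pdivlMr ?ltr0n // -natrM ler_nat -hg mulnA leq_mul2r; lia.
by rewrite -hg natrM mulfK // hj natrD natrM.
Qed.

Lemma rat_bwd n s p g i j (r : int) : g * s = n * p -> 0 < s ->
  (0 <= r)%R ->
  (j%:R = i%:R + r%:~R * ((n * p)%:R / s%:R) :> rat)%R ->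
  exists r' : nat, j = i + r' * g.
Proof.
move=> hg s0; case: r => [r' _|//] Heq; exists r'.
have s0' : (s%:R : rat) != 0%R by rewrite pnatr_eq0 -lt0n.
move: Heq; rewrite -pmulrn -hg natrM mulfK // -natrM -natrD => /eqP.
by rewrite eqr_nat => /eqP.
Qed.
Lemma shift_g n t p x z : is_IA n t -> Rs t p -> p <= size t ->
  memP n t (x + pos t p) z <-> memP n t x z.
Proof.
move=> hI hp ps; split.
  by case=> k ->; exists (k + p); rewrite R_pos //; congr agent_mod; lia.
case=> k ->; exists (k + size t - p).
have -> : x + pos t p + pos t (k + size t - p) = (x + pos t k) + n.
  rewrite -addnA (addnC (pos t p)) -R_pos // subnK; last by lia.
  by rewrite (posDs _ hI) addnA.
by apply: am_mod; rewrite modnDr.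
Qed.

Lemma shift_rg n t p x z r : is_IA n t -> Rs t p -> p <= size t ->
  memP n t (x + r * pos t p) z <-> memP n t x z.
Proof.
move=> hI hp ps; elim: r x => [|r IH] x; first by rewrite mul0n addn0.
rewrite mulSn addnA IH; exact: shift_g.
Qed.

Lemma coal_eq n t x y : is_IA n t ->
  (coalition n x t =i coalition n y t) <-> (forall z, memP n t x z <-> memP n t y z).
Proof.
move=> hI; split.
  move=> H z; split => h.
    by apply/(memC y z hI); rewrite -H; apply/(memC x z hI).
  by apply/(memC x z hI); rewrite H; apply/(memC y z hI).
move=> H z; apply/idP/idP => h.
  by apply/(memC y z hI); apply/H; apply/(memC x z hI).
by apply/(memC x z hI); apply/H; apply/(memC y z hI).
Qed.
Lemma stab_R n t i j : is_IA n t -> 1 <= i -> i < j -> j <= n ->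
  (forall z, memP n t i z <-> memP n t j z) ->
  exists m, [/\ 0 < m, Rs t m & pos t m = j - i].
Proof.
move=> hI i1 ij jn H.
set d := j - i.
have inv : forall y, Sp t (y + d) <-> Sp t y.
  move=> y; rewrite (S_mem i (y+d) hI) (S_mem j (y) hI).
  have -> : i + (y + d) = j + y by rewrite /d; lia.
  exact: H.
have Sd : Sp t d.
  apply/(S_mem i (d) hI).
  have -> : i + d = j by rewrite /d; lia.
  apply/H; exists 0; rewrite pos0 addn0 am_id //; lia.
case: Sd => m hm.
have m0 : 0 < m.
  case: m hm => // ; rewrite pos0 /d; lia.
have claim : forall k, pos t (k + m) = pos t k + d.
  elim=> [|k IH]; first by rewrite add0n pos0 hm.
  have [l hl] : Sp t (pos t k.+1 + d) by apply/inv; exists k.+1.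
  have : pos t (k + m) < pos t l by rewrite -hl IH posS; lia.
  rewrite ltnNge pos_le -ltnNge => hlt.
  have le1 : pos t (k.+1 + m) <= pos t l by rewrite pos_le addSn.
  have hge : d <= pos t (k.+1 + m).
    have := pos_lt t (ltnSn (k + m)); rewrite -addSn IH; lia.
  have [l' hl'] : Sp t (pos t (k.+1 + m) - d).
    by apply/inv; rewrite subnK //; exists (k.+1 + m).
  have : pos t k < pos t l'.
    have := pos_lt t (ltnSn (k + m)); rewrite -addSn IH; lia.
  rewrite ltnNge pos_le -ltnNge => hlt'.
  have le2 : pos t k.+1 <= pos t l' by rewrite pos_le.
  lia.
exists m; split => //.
move=> k; have := claim k.+1; have := claim k; rewrite addSn !posS; lia.
Qed.
Theorem theorem6 (n : nat) (t : seq nat) :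
  is_IA n t ->
  forall i j : nat, 1 <= i -> i <= j -> j <= n ->
  (coalition n i t =i coalition n j t <->
   exists r : int,
     (0 <= r)%R /\
     (r%:~R <= ((n - i) * size t)%:R / (n * period t)%:R :> rat)%R /\
     (j%:R = i%:R + r%:~R * ((n * period t)%:R / (size t)%:R) :> rat)%R).
Proof.
move=> hI i j i1 ij jn.
have s0 : 0 < size t by case/andP: hI => /andP[].
have n0 := IA_n0 hI.
have [hper hmin] := period_spec s0.
set p := period t in hper hmin *.
have [p0 pd Rp] : [/\ 0 < p, p %| size t & Rs t p] by apply/is_periodP.
have ps : p <= size t by apply: dvdn_leq.
set g := pos t p.
have hg : g * size t = n * p.
  have := R_posM (size t %/ p) Rp; rewrite divnK // (pos_s hI) => ->.
  by rewrite -{1}(divnK pd) mulnA (mulnC g).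
have np0 : 0 < n * p by rewrite muln_gt0 n0.
rewrite (coal_eq _ _ hI); split.
  move=> H; case: (ltngtP i j) ij => // [hij|hij] _; last first.
    by apply: (rat_fwd (r := 0) hg) => //; rewrite mul0n addn0.
  have [m [m0 Rm hm]] := stab_R hI i1 hij jn H.
  set q := gcdn m p.
  have Rq : Rs t q by apply: R_gcd.
  have qp : q %| p by apply: dvdn_gcdr.
  have q0 : 0 < q by rewrite gcdn_gt0 p0 orbT.
  have hq : is_period t q.
    apply/is_periodP => //; split => //; exact: dvdn_trans pd.
  have := hmin q hq; have := dvdn_leq p0 qp => h1 h2.
  have qp' : q = p by apply/eqP; rewrite eqn_leq h1 h2.
  have pm : p %| m by rewrite -qp' dvdn_gcdl.
  apply: (rat_fwd (r := m %/ p) hg) => //.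
  by rewrite -(R_posM _ Rp) divnK // hm; lia.
case=> r [r0 [_ hr]].
have [r' hj] := rat_bwd hg s0 r0 hr.
move=> z; rewrite hj (shift_rg _ _ _ hI Rp ps); done.
Qed.
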